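(* Let $\mathcal M$ be a complete, connected Riemannian manifold, let $A=(a_{ij})\in\mathbb R^{N\times K}$ have unit row sums, let $f\in\mathcal M^N$ and $p\in[1,\infty)$. Then the data term $u\mapsto \mathrm{dist}(\mathcal A(u),f)^p=\sum_{i=1}^N\mathrm{dist}(\mathcal A(u)_i,f_i)^p$ is a lower semicontinuous function on $\mathcal M^K$.
   Context: $\mathrm{dist}$ denotes the Riemannian distance on $\mathcal M$. The entries $a_{ij}$ may be negative; only $\sum_j a_{ij}=1$ for each $i$ is assumed. For $u\in\mathcal M^K$, $\mathrm{mean}(a_{i,\cdot},u)=\operatorname{argmin}_{v\in\mathcal M}\sum_{j=1}^K a_{ij}\,\mathrm{dist}(v,u_j)^2$ (set of minimizers), and $\mathcal A(u)_i$ is the set of elements of $\mathrm{mean}(a_{i,\cdot},u)$ minimizing $\mathrm{dist}(\cdot,f_i)$ over $\mathrm{mean}(a_{i,\cdot},u)$; $\mathrm{dist}(\mathcal A(u)_i,f_i)$ denotes the common distance of these points to $f_i$. *)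

(* Defs.v *)
From HB Require Import structures.
From mathcomp Require Import all_boot all_order all_algebra.
From mathcomp Require Import all_classical all_reals all_analysis.
Set Implicit Arguments. Unset Strict Implicit. Unset Printing Implicit Defensive.
Import Order.TTheory GRing.Theory Num.Theory.
Local Open Scope ring_scope.
Local Open Scope classical_set_scope.

(* The Riemannian manifold M is represented through its Riemannian distance
   dist : M -> M -> R.  By Hopf--Rinow, a complete connected Riemannian
   manifold is, as a metric space, a proper (Heine--Borel) length space;
   [proper_length_metric dist] records exactly these properties. *)
Definition proper_length_metric (R : realType) (M : Type) (dist : M -> M -> R) :=
  [/\ (forall x y, 0 <= dist x y) /\
      (forall x y, dist x y = 0 <-> x = y),
      (forall x y, dist x y = dist y x),
      (forall x y z, dist x z <= dist x y + dist y z),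
      (forall (s : nat -> M) (x0 : M) (B : R), (forall n, dist (s n) x0 <= B) ->
         exists (phi : nat -> nat) (x : M),
           (forall n, (phi n < phi n.+1)%N) /\
           (forall e : R, 0 < e -> exists n0 : nat, forall n : nat, (n0 <= n)%N ->
               dist (s (phi n)) x < e)) &
      (forall x y (e : R), 0 < e -> exists z,
          dist x z <= dist x y / 2 + e /\ dist z y <= dist x y / 2 + e)].

Definition mean_set (R : realType) (M : Type) (dist : M -> M -> R) (K : nat)
    (a : 'I_K -> R) (u : 'I_K -> M) : set M :=
  [set v | forall w, \sum_(j < K) a j * dist v (u j) ^+ 2
                     <= \sum_(j < K) a j * dist w (u j) ^+ 2].

Definition A_set (R : realType) (M : Type) (dist : M -> M -> R) (N K : nat)
    (A : 'M[R]_(N, K)) (f : 'I_N -> M) (u : 'I_K -> M) (i : 'I_N) : set M :=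
  [set v | mean_set dist (fun j => A i j) u v /\
           forall w, mean_set dist (fun j => A i j) u w -> dist v (f i) <= dist w (f i)].

(* dist(A(u)_i, f_i): the common distance of the points of A(u)_i to f_i *)
Definition dist_A (R : realType) (M : Type) (dist : M -> M -> R) (N K : nat)
    (A : 'M[R]_(N, K)) (f : 'I_N -> M) (u : 'I_K -> M) (i : 'I_N) : R :=
  inf [set d | exists2 v, A_set dist A f u i v & d = dist v (f i)].

Definition data_term (R : realType) (M : Type) (dist : M -> M -> R) (N K : nat)
    (A : 'M[R]_(N, K)) (f : 'I_N -> M) (p : R) (u : 'I_K -> M) : R :=
  \sum_(i < N) (dist_A dist A f u i) `^ p.

Definition lsc_prod (R : realType) (M : Type) (dist : M -> M -> R) (K : nat)
    (F : ('I_K -> M) -> R) :=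
  forall (u : 'I_K -> M) (e : R), 0 < e -> exists2 delta : R, 0 < delta &
    forall v : 'I_K -> M, (forall j, dist (v j) (u j) < delta) -> F u - e < F v.

(* Main.v *)
Require Import Defs.
From HB Require Import structures.
From mathcomp Require Import all_boot all_order all_algebra.
From mathcomp Require Import all_classical all_reals all_analysis.
From mathcomp Require Import ring lra.
Import Order.TTheory GRing.Theory Num.Theory.
Import numFieldNormedType.Exports.
Local Open Scope ring_scope.

Module Helpers.
Set Implicit Arguments. Unset Strict Implicit. Unset Printing Implicit Defensive.

Lemma small_inv (R : realType) (e : R) : 0 < e ->
  exists N : nat, forall n : nat, (N <= n)%N -> 1 / (n.+1%:R) < e.
Proof.
move=> e0; exists (Num.Def.trunc (e^-1)) => n hn.
have h1 : e^-1 < n.+1%:R.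
  apply: (lt_le_trans (truncnS_gt _)); rewrite ler_nat; by [].
rewrite div1r -(invrK e) ltf_pV2 ?posrE ?invr_gt0 //.
Qed.

Lemma le_eps (R : realType) (x y : R) : (forall e, 0 < e -> x <= y + e) -> x <= y.
Proof. by move=> H; apply/ler_addgt0Pr. Qed.

Lemma sq_diff (R : realType) (d d' D : R) : 0 <= d -> 0 <= d' ->
  d - d' <= D -> d' - d <= D ->
  `|d ^+ 2 - d' ^+ 2| <= D * (2 * d + D).
Proof.
move=> h1 h2 h3 h4; rewrite ler_norml; apply/andP; split; nra.
Qed.

Lemma incr_ge (phi : nat -> nat) : (forall n, (phi n < phi n.+1)%N) -> forall n, (n <= phi n)%N.
Proof.
move=> H; elim=> [//|n IH]; exact: leq_ltn_trans IH (H n).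
Qed.
Lemma powR_epsdelta (R : realType) (p y e : R) : 0 < y -> 0 < e ->
  exists2 eta : R, 0 < eta & forall z, `|y - z| < eta -> `|y `^ p - z `^ p| < e.
Proof.
move=> y0 e0.
have hd : derivable (fun z : R => z `^ p) y 1.
  by apply: (@derivable_powR R 1 p y); rewrite in_itv /= y0.
have := differentiable_continuous (proj1 (derivable1_diffP _ _) hd).
move=> /cvgr_dist_lt /(_ e e0) /nbhs_ballP [d /= d0 Hd].
exists d => // z yz; exact: Hd.

Qed.




Definition mval (R : realType) (M : Type) (dist : M -> M -> R) (K : nat)
  (a : 'I_K -> R) (x : 'I_K -> M) (w : M) : R :=
  \sum_(j < K) a j * dist w (x j) ^+ 2.

Lemma val_close (R : realType) (M : Type) (dist : M -> M -> R) (K : nat)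
  (a : 'I_K -> R) (x x' : 'I_K -> M) (w w' : M) (eta : R) :
  proper_length_metric dist -> 0 <= eta <= 1 ->
  (forall j, dist w w' + dist (x j) (x' j) <= eta) ->
  `|mval dist a x w - mval dist a x' w'| <=
     eta * \sum_(j < K) `|a j| * (2 * dist w (x j) + 1).
Proof.
move=> [[d0 _] dsym dtri _ _] /andP[e0 e1] Hj.
rewrite /mval -sumrB mulr_sumr; apply: le_trans (ler_norm_sum _ _ _) _.
apply: ler_sum => j _.
rewrite -mulrBr normrM.
have h1 : dist w (x j) - dist w' (x' j) <= dist w w' + dist (x j) (x' j).
  have := dtri w w' (x j); have := dtri w' (x' j) (x j).
  rewrite (dsym (x' j) (x j)); lra.
have h2 : dist w' (x' j) - dist w (x j) <= dist w w' + dist (x j) (x' j).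
  have := dtri w' w (x' j); have := dtri w (x j) (x' j).
  rewrite (dsym w' w); lra.
have := sq_diff (d0 w (x j)) (d0 w' (x' j)) h1 h2.
set D := dist w w' + dist (x j) (x' j).
have hD : 0 <= D by rewrite /D addr_ge0.
have hDe := Hj j; rewrite -/D in hDe.
move=> hsq.
have hsq' : `|dist w (x j) ^+ 2 - dist w' (x' j) ^+ 2| <= eta * (2 * dist w (x j) + 1).
  apply: le_trans hsq _; have := d0 w (x j); nra.
by rewrite mulrCA; apply: ler_wpM2l.
Qed.


Definition coS (R : realType) (M : Type) (dist : M -> M -> R) (K : nat)
  (a : 'I_K -> R) (x : 'I_K -> M) (j0 : 'I_K) : R :=
  \sum_(j < K) `|a j| * dist (x j) (x j0).
Definition coT (R : realType) (M : Type) (dist : M -> M -> R) (K : nat)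
  (a : 'I_K -> R) (x : 'I_K -> M) (j0 : 'I_K) : R :=
  \sum_(j < K) `|a j| * dist (x j) (x j0) ^+ 2.

Lemma val_coercive (R : realType) (M : Type) (dist : M -> M -> R) (K : nat)
  (a : 'I_K -> R) (x : 'I_K -> M) (j0 : 'I_K) (w : M) :
  proper_length_metric dist -> \sum_(j < K) a j = 1 ->
  dist w (x j0) ^+ 2 - 2 * dist w (x j0) * coS dist a x j0 - coT dist a x j0
   <= mval dist a x w.
Proof.
move=> [[d0 _] dsym dtri _ _] Hs.
set d1 := dist w (x j0).
have -> : d1 ^+ 2 - 2 * d1 * coS dist a x j0 - coT dist a x j0 =
   \sum_(j < K) (a j * d1 ^+ 2 - `|a j| * (dist (x j) (x j0) * (2 * d1 + dist (x j) (x j0)))).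
  rewrite sumrB -mulr_suml Hs mul1r /coS /coT mulr_sumr -addrA -opprD -big_split /=.
  congr (_ - _); apply: eq_bigr => j _; ring.
apply: ler_sum => j _.
set D := dist (x j) (x j0).
have h1 : d1 - dist w (x j) <= D by have := dtri w (x j) (x j0); rewrite /d1 /D; lra.
have h2 : dist w (x j) - d1 <= D.
  have := dtri w (x j0) (x j); rewrite /d1 /D (dsym (x j0) (x j)); lra.
have := sq_diff (d0 w (x j0)) (d0 w (x j)) h1 h2; rewrite -/d1 => hsq.
have : a j * (d1 ^+ 2 - dist w (x j) ^+ 2) <= `|a j| * (D * (2 * d1 + D)).
  apply: le_trans (ler_norm _) _; rewrite normrM; apply: ler_wpM2l => //.
lra.
Qed.


Lemma exists_min (R : realType) (M : Type) (dist : M -> M -> R)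
  (P : M -> Prop) (phi : M -> R) (x0 : M) (B lb : R) (z0 : M) :
 proper_length_metric dist ->
 P z0 -> (forall w, P w -> lb <= phi w) ->
 (forall w, P w -> phi w <= phi z0 + 1 -> dist w x0 <= B) ->
 (forall (s : nat -> M) (w : M) (m : R), (forall n, P (s n)) ->
    (forall n, phi (s n) <= m + 1 / n.+1%:R) ->
    (forall e, 0 < e -> exists n0 : nat, forall n, (n0 <= n)%N -> dist (s n) w < e) ->
    P w /\ phi w <= m) ->
 exists w, P w /\ forall z, P z -> phi w <= phi z.
Proof.
move=> [_ _ _ Hprop _] Pz0 Hlb Hbd Hcl.
pose E : set R := (fun y => exists2 w, P w & y = phi w).
have hinf : has_inf E.
  split; first by exists (phi z0); exists z0.
  by exists lb => y [w Pw ->]; apply: Hlb.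
pose m := inf E.
have hm z : P z -> m <= phi z.
  by move=> Pz; apply: (ge_inf (proj2 hinf)); exists z.
have hs : forall n : nat, exists w, P w /\ phi w < m + 1 / n.+1%:R.
  move=> n; have [|y [w Pw ->] hy] := @inf_adherent R E (1 / n.+1%:R) _ hinf.
    by rewrite divr_gt0.
  by exists w.
have [s Hs] := choice hs.
have hsb n : dist (s n) x0 <= B.
  have [Ps1 Ps2] := Hs n; apply: Hbd => //.
  apply: (le_trans (ltW Ps2)); apply: lerD; first exact: hm.
  by rewrite ler_pdivrMr // mul1r ler1n.
have [psi [w [hpsi hconv]]] := Hprop s x0 B hsb.
have [Pw hw] : P w /\ phi w <= m.
  apply: (Hcl (fun n => s (psi n)) w m (fun n => proj1 (Hs (psi n)))) => //.
  move=> n /=; apply: (le_trans (ltW (proj2 (Hs (psi n))))); rewrite lerD2l.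
  by rewrite !div1r lef_pV2 ?posrE // ler_nat ltnS incr_ge.
exists w; split => // z Pz; exact: le_trans hw (hm z Pz).
Qed.


Lemma eta_choice (R : realType) (e C : R) : 0 < e -> 0 <= C ->
  exists2 eta : R, 0 < eta /\ eta <= 1 & eta * C <= e.
Proof.
move=> e0 C0; exists (Num.min 1 (e / (C + 1))).
  split; last by rewrite ge_min lexx.
  by rewrite lt_min ltr01 /= divr_gt0 // ltr_wpDl.
have h1 : Num.min 1 (e / (C + 1)) <= e / (C + 1) by rewrite ge_min lexx orbT.
have h0 : 0 < Num.min 1 (e / (C + 1)) by rewrite lt_min ltr01 /= divr_gt0 // ltr_wpDl.
apply: (le_trans (y := Num.min 1 (e / (C + 1)) * (C + 1))).
  by rewrite ler_pM2l // lerDl.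
apply: (le_trans (y := e / (C + 1) * (C + 1))).
  by rewrite ler_pM2r // ltr_wpDl.
by rewrite divfK // gt_eqF // ltr_wpDl.
Qed.

Lemma dist_self (R : realType) (M : Type) (dist : M -> M -> R) (x : M) :
  proper_length_metric dist -> dist x x = 0.
Proof. by move=> [[_ H] _ _ _ _]; apply/H. Qed.

Lemma Cnn (R : realType) (M : Type) (dist : M -> M -> R) (K : nat)
  (a : 'I_K -> R) (x : 'I_K -> M) (w : M) :
  proper_length_metric dist -> 0 <= \sum_(j < K) `|a j| * (2 * dist w (x j) + 1).
Proof.
move=> [[d0 _] _ _ _ _]; apply: sumr_ge0 => j _; apply: mulr_ge0 => //.
by apply: addr_ge0 => //; apply: mulr_ge0 => //.
Qed.

Lemma mean_exists (R : realType) (M : Type) (dist : M -> M -> R) (K : nat)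
  (a : 'I_K -> R) (x : 'I_K -> M) (j0 : 'I_K) :
  proper_length_metric dist -> \sum_(j < K) a j = 1 ->
  exists w, mean_set dist a x w.
Proof.
move=> H Hs.
have H' := H; move: H' => [[d0 _] dsym dtri _ _].
set S := coS dist a x j0; set T := coT dist a x j0.
have S0 : 0 <= S by apply: sumr_ge0 => j _; apply: mulr_ge0.
have T0 : 0 <= T by apply: sumr_ge0 => j _; apply: mulr_ge0 => //; apply: exprn_ge0.
have hT : mval dist a x (x j0) <= T.
  apply: ler_sum => j _; rewrite dsym; apply: le_trans (ler_norm _) _.
  by rewrite normrM [X in _ * X]ger0_norm // exprn_ge0.
have [w [_ hw]] : exists w, True /\ forall z, True -> mval dist a x w <= mval dist a x z.
  apply: (@exists_min R M dist (fun _ => True) (mval dist a x) (x j0)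
   (2 * S + 2 * T + 2) (- S ^+ 2 - T) (x j0) H I).
  - move=> w _; have := @val_coercive R M dist K a x j0 w H Hs; rewrite -/S -/T.
  have := sqr_ge0 (dist w (x j0) - S); nra.
  - move=> w _ hw; have := @val_coercive R M dist K a x j0 w H Hs; rewrite -/S -/T => hc.
  have hd := d0 w (x j0).
  have : dist w (x j0) ^+ 2 <= 2 * dist w (x j0) * S + 2 * T + 1 by lra.
  case: (lerP (dist w (x j0)) 1) => hd1 hsq; first by lra.
  nra.
  - move=> s w m _ hm hconv; split => //.
    apply: le_eps => e e0.
    have e20 : 0 < e / 2 by rewrite divr_gt0.
    have [eta [eta0 eta1] hC] := @eta_choice R (e / 2) _ e20 (@Cnn R M dist K a x w H).
    have [n0 hn0] := hconv eta eta0.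
    have [N1 hN1] := @small_inv R _ e20.
    set n := maxn n0 N1.
    have hd : dist (s n) w < eta by apply: hn0; rewrite leq_maxl.
    have h1 : 1 / n.+1%:R < e / 2 by apply: hN1; rewrite leq_maxr.
    have hcl := @val_close R M dist K a x x w (s n) eta H
      (ltac:(by rewrite (ltW eta0) eta1))
      (fun j => ltac:(by rewrite (dist_self _ H) addr0 dsym (ltW hd))).
    have := ler_norm (mval dist a x w - mval dist a x (s n)).
    have := hm n.
    move=> ha hb; move: ha hb hcl hC h1; set q := 1 / n.+1%:R; set C := eta * _; set X := mval dist a x w; set Y := mval dist a x (s n); set Z := `|X - Y|; lra.
by exists w => z; apply: hw.
Qed.


Lemma A_exists (R : realType) (M : Type) (dist : M -> M -> R) (N K : nat)
  (A : 'M[R]_(N, K)) (f : 'I_N -> M) (u : 'I_K -> M) (i : 'I_N) (j0 : 'I_K) :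
  proper_length_metric dist -> \sum_(j < K) A i j = 1 ->
  exists w, A_set dist A f u i w.
Proof.
move=> H Hs.
have H' := H; move: H' => [[d0 _] dsym dtri _ _].
pose a := fun j => A i j.
have [z0 hz0] := @mean_exists R M dist K a u j0 H Hs.
have [w [Pw hw]] : exists w, mean_set dist a u w /\
    forall z, mean_set dist a u z -> dist w (f i) <= dist z (f i).
  apply: (@exists_min R M dist (mean_set dist a u) (fun w => dist w (f i)) (f i)
     (dist z0 (f i) + 1) 0 z0 H hz0).
  - by move=> w _; exact: d0.
  - by move=> w _.
  - move=> s w m Ps hm hconv; split.
    + move=> z; change (mval dist a u w <= mval dist a u z); apply: le_eps => e e0.
      have [eta [eta0 eta1] hC] := @eta_choice R e _ e0 (@Cnn R M dist K a u w H).
      have [n0 hn0] := hconv eta eta0.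
      have hd : dist (s n0) w < eta by apply: hn0.
      have hcl := @val_close R M dist K a u u w (s n0) eta H
        (ltac:(by rewrite (ltW eta0) eta1))
        (fun j => ltac:(by rewrite (dist_self _ H) addr0 dsym (ltW hd))).
      have hP : mval dist a u (s n0) <= mval dist a u z := Ps n0 z.
      have := ler_norm (mval dist a u w - mval dist a u (s n0)).
      move: hP hcl hC; set C := eta * _; set X := mval dist a u w;
        set Y := mval dist a u (s n0); set Z := `|X - Y|; lra.
    + apply: le_eps => e e0.
      have e20 : 0 < e / 2 by rewrite divr_gt0.
      have [n0 hn0] := hconv _ e20.
      have [N1 hN1] := @small_inv R _ e20.
      set n := maxn n0 N1.
      have hd : dist (s n) w < e / 2 by apply: hn0; rewrite leq_maxl.
      have h1 : 1 / n.+1%:R < e / 2 by apply: hN1; rewrite leq_maxr.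
      have := dtri w (s n) (f i); have := hm n; rewrite (dsym w (s n)).
      move: hd h1; set q := 1 / n.+1%:R; lra.
by exists w; split.
Qed.

Lemma seq_main (R : realType) (M : Type) (dist : M -> M -> R) (K : nat)
  (a : 'I_K -> R) (fi : M) (u : 'I_K -> M) (v : nat -> 'I_K -> M) (w : nat -> M) (c : R) :
  proper_length_metric dist ->
  (forall n j, dist (v n j) (u j) < 1 / n.+1%:R) ->
  (forall n, mean_set dist a (v n) (w n)) -> (forall n, dist (w n) fi <= c) ->
  exists w0, mean_set dist a u w0 /\ dist w0 fi <= c.
Proof.
move=> H hv hw hc.
have H' := H; move: H' => [[d0 _] dsym dtri Hprop _].
have [psi [w0 [hpsi hconv]]] := Hprop w fi c hc.
exists w0; split.
- move=> z; change (mval dist a u w0 <= mval dist a u z); apply: le_eps => e e0.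
  have C0 := addr_ge0 (@Cnn R M dist K a u w0 H) (@Cnn R M dist K a u z H).
  have [eta [eta0 eta1] hC] := @eta_choice R e _ e0 C0.
  have eta20 : 0 < eta / 2 by rewrite divr_gt0.
  have [n0 hn0] := hconv _ eta20.
  have [N1 hN1] := @small_inv R _ eta20.
  set n := maxn n0 N1.
  set k := psi n.
  have hd : dist (w k) w0 < eta / 2 by apply: hn0; rewrite leq_maxl.
  have h1 : 1 / n.+1%:R < eta / 2 by apply: hN1; rewrite leq_maxr.
  have hk : 1 / k.+1%:R <= 1 / n.+1%:R :> R.
    by rewrite !div1r lef_pV2 ?posrE // ler_nat ltnS incr_ge.
  have hvj j : dist (u j) (v k j) < eta / 2.
    rewrite dsym; apply: lt_le_trans (hv k j) _; exact: le_trans hk (ltW h1).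
  have hcl1 := @val_close R M dist K a u (v k) w0 (w k) eta H
      (ltac:(by rewrite (ltW eta0) eta1))
      (fun j => ltac:(by rewrite dsym; have := hvj j; move: hd; lra)).
  have hcl2 := @val_close R M dist K a u (v k) z z eta H
      (ltac:(by rewrite (ltW eta0) eta1))
      (fun j => ltac:(by rewrite (dist_self _ H) add0r; have := hvj j; lra)).
  have hP : mval dist a (v k) (w k) <= mval dist a (v k) z := hw k z.
  have := ler_norm (mval dist a u w0 - mval dist a (v k) (w k)).
  have := ler_norm (mval dist a (v k) z - mval dist a u z); rewrite distrC.
  rewrite mulrDr in hC.
  move: hP hcl1 hcl2 hC.
  set C1 := eta * \sum_(j < K) _; set C2 := eta * \sum_(j < K) _.
  set X := mval dist a u w0; set Y := mval dist a (v k) (w k).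
  set Z := mval dist a (v k) z; set W := mval dist a u z.
  set N1' := `|X - Y|; set N2 := `|W - Z|; lra.
- apply: le_eps => e e0.
  have [n0 hn0] := hconv _ e0.
  have hd : dist (w (psi n0)) w0 < e by apply: hn0.
  have := dtri w0 (w (psi n0)) fi; have := hc (psi n0); rewrite (dsym w0 (w (psi n0))).
  move: hd; lra.
Qed.

Open Scope classical_set_scope.

Lemma dist_A_eq (R : realType) (M : Type) (dist : M -> M -> R) (N K : nat)
  (A : 'M[R]_(N, K)) (f : 'I_N -> M) (u : 'I_K -> M) (i : 'I_N) (w : M) :
  A_set dist A f u i w -> dist_A dist A f u i = dist w (f i).
Proof.
move=> [hw1 hw2]; rewrite /dist_A.
rewrite (_ : [set d | exists2 v, A_set dist A f u i v & d = dist v (f i)] =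
   [set dist w (f i)]) ?inf1 //.
apply/seteqP; split => d /=.
- move=> [v [hv1 hv2] ->]; apply/le_anti; rewrite hv2 //=; exact: hw2.
- by move=> ->; exists w.
Qed.

Lemma comp_lsc (R : realType) (M : Type) (dist : M -> M -> R) (N K : nat)
  (A : 'M[R]_(N, K)) (f : 'I_N -> M) (p : R) (u : 'I_K -> M) (i : 'I_N) (j0 : 'I_K) (e : R) :
  proper_length_metric dist -> \sum_(j < K) A i j = 1 -> 1 <= p -> 0 < e ->
  exists2 delta : R, 0 < delta & forall v : 'I_K -> M,
    (forall j, dist (v j) (u j) < delta) ->
    (dist_A dist A f u i) `^ p - e < (dist_A dist A f v i) `^ p.
Proof.
move=> H Hs hp e0.
have H' := H; move: H' => [[d0 _] dsym dtri _ _].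
have [wu hwu] := A_exists f u j0 H Hs.
have hy := dist_A_eq hwu.
set y := dist_A dist A f u i in hy *.
have p0 : p != 0 by apply: lt0r_neq0; apply: lt_le_trans hp.
have y0 : 0 <= y by rewrite hy.
case: (eqVneq y 0) => [->|yn0].
  exists 1 => // v _; rewrite powR0 // sub0r.
  by apply: lt_le_trans (powR_ge0 _ _); rewrite oppr_lt0.
have ypos : 0 < y by rewrite lt0r yn0.
have [eta eta0 Heta] := @powR_epsdelta R p y e ypos e0.
case: (pselect (exists2 delta : R, 0 < delta & forall v : 'I_K -> M,
    (forall j, dist (v j) (u j) < delta) ->
    y `^ p - e < (dist_A dist A f v i) `^ p)) => // hno.
exfalso.
have hv : forall n : nat, exists v : 'I_K -> M, (forall j, dist (v j) (u j) < 1 / n.+1%:R) /\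
    (dist_A dist A f v i) `^ p <= y `^ p - e.
  move=> n; apply: contrapT => hn; apply: hno; exists (1 / n.+1%:R) => // v hvj.
  rewrite ltNge; apply/negP => hle; apply: hn; exists v; split => //.
have [vs hvs] := choice hv.
have hw : forall n : nat, exists w, A_set dist A f (vs n) i w.
  by move=> n; apply: A_exists j0 H Hs.
have [ws hws] := choice hw.
have hc : forall n, dist (ws n) (f i) <= y - eta / 2.
  move=> n; rewrite -(dist_A_eq (hws n)).
  have [hvj hle] := hvs n.
  set g := dist_A dist A f (vs n) i in hle *.
  have g0 : 0 <= g by rewrite /g (dist_A_eq (hws n)).
  rewrite leNgt; apply/negP => hlt.
  case: (lerP y g) => hyg.
    have := @ge0_ler_powR R p (le_trans ler01 hp) y g.
    rewrite !nnegrE => /(_ y0 g0 hyg).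
    move: hle; have := e0; set P1 := y `^ p; set P2 := g `^ p; lra.
  have := Heta g; rewrite ger0_norm ?subr_ge0 ?(ltW hyg) //.
  move=> /(_ ltac:(lra)) hlt2.
  have := ler_norm (y `^ p - g `^ p).
  move: hle hlt2; set P1 := y `^ p; set P2 := g `^ p; set Q := `|P1 - P2|; lra.
have [w0 [hw0 hw0c]] := @seq_main R M dist K (fun j => A i j) (f i) u vs ws (y - eta / 2) H
  (fun n => proj1 (hvs n)) (fun n => proj1 (hws n)) hc.
have := proj2 hwu w0 hw0; rewrite -hy.
move: hw0c eta0; lra.
Qed.

End Helpers.
Import Helpers.

Theorem lemma3p3 (R : realType) (M : Type) (dist : M -> M -> R)
    (N K : nat) (A : 'M[R]_(N, K)) (f : 'I_N -> M) (p : R) :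
  proper_length_metric dist ->
  (forall i : 'I_N, \sum_(j < K) A i j = 1) ->
  1 <= p ->
  lsc_prod dist (data_term dist A f p).
Proof.
move=> H Hs hp u e e0.
case: N A f Hs => [|N] A f Hs.
  by exists 1 => // v _; rewrite /data_term !big_ord0 sub0r oppr_lt0.
have hK : (0 < K)%N.
  move: (Hs ord0); case: (K) (A) => [|k] A' //.
  by rewrite big_ord0 => /eqP; rewrite eq_sym oner_eq0.
pose j0 : 'I_K := Ordinal hK.
pose e' := e / N.+1%:R.
have e'0 : 0 < e' by rewrite divr_gt0.
have hc : forall i : 'I_N.+1, exists delta : R, 0 < delta /\ forall v : 'I_K -> M,
    (forall j, dist (v j) (u j) < delta) ->
    (dist_A dist A f u i) `^ p - e' < (dist_A dist A f v i) `^ p.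
  move=> i; have [d d0 hd] := @comp_lsc R M dist N.+1 K A f p u i j0 e' H (Hs i) hp e'0.
  by exists d.
have [df hdf] := choice hc.
exists (\big[Order.min/1]_(i < N.+1) df i).
  by apply: lt_bigmin => // i _; exact: (proj1 (hdf i)).
move=> v hv.
have he : e = \sum_(i < N.+1) e'.
  rewrite sumr_const card_ord -mulr_natr /e' -mulrA mulVf ?mulr1 // pnatr_eq0.
rewrite /data_term he -sumrB.
apply: ltr_sum; first by apply/hasP; exists ord0; rewrite ?mem_index_enum.
move=> i _; apply: (proj2 (hdf i)) => j.
apply: lt_le_trans (hv j) _.
exact: bigmin_le.
Qed.
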